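(* Let $0<w_1<\dots<w_n$ be integers with $\sum_i w_i<2^n-1$, and let $2^{n/2}\le\Delta\le d<2^n$. Let $j\in\{0,\dots,n-1\}$ satisfy $\#\{t:f_t>2^j\}>\frac{\Delta}{2^{j+1}n}$. Set $h=2^j+1$, $m=\lceil \Delta/(2^{j+1}n)\rceil$ and $X=\{t: f_t\ge h\}$, so that $|X|\ge m$. Let $P$ be a parameter with $2\le P\le 2m$, and set $k=\lceil m/(4P)\rceil$. Choose a uniformly random prime $p\in[P,2P]$ and then a uniformly random $r^*\in\mathbb{Z}_p$. For $r\in\mathbb{Z}_p$ let $B_r=\{S\subseteq[n]: w(S)\equiv r\pmod p\}$. Then with probability at least $\Omega(1/n)$ over the choice of $p$ and $r^*$, there are at least $k$ integers $t\in\mathbb{N}$ with $\#\{S\in B_{r^*}: w(S)=t\}\ge h$.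
   Context: Write $[n]=\{1,\dots,n\}$ and $w(S)=\sum_{i\in S}w_i$. The frequency is $f_t=\#\{S\subseteq[n]:w(S)=t\}$. The parameter is $d=\sum_{0\le t<2^n}\max\{0,f_t-1\}$. The constant in $\Omega(\cdot)$ is absolute. *)

(* Defs.v *)
From HB Require Import structures.
From mathcomp Require Import all_boot all_order all_algebra.
From mathcomp Require Import reals.
Set Implicit Arguments. Unset Strict Implicit. Unset Printing Implicit Defensive.
Import Order.TTheory GRing.Theory Num.Theory.

Definition wS (n : nat) (w : 'I_n -> nat) (S : {set 'I_n}) : nat :=
  \sum_(i in S) w i.

Definition freq (n : nat) (w : 'I_n -> nat) (t : nat) : nat :=
  #|[set S : {set 'I_n} | wS w S == t]|.

(* d = sum_{0 <= t < 2^n} max(0, f_t - 1)  (nat subtraction is truncated) *)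
Definition dpar (n : nat) (w : 'I_n -> nat) : nat :=
  \sum_(t < 2 ^ n) (freq w t - 1).

(* #{t : f_t > 2^j}; t ranges over [0, 2^n), which contains every value w(S)
   since sum_i w_i < 2^n - 1, so f_t = 0 outside this range. *)
Definition num_heavy (n : nat) (w : 'I_n -> nat) (j : nat) : nat :=
  #|[set t : 'I_(2 ^ n) | 2 ^ j < freq w t]|.

Definition freq_mod (n : nat) (w : 'I_n -> nat) (p r t : nat) : nat :=
  #|[set S : {set 'I_n} | (wS w S == t) && (wS w S %% p == r)]|.

Definition num_good_t (n : nat) (w : 'I_n -> nat) (p r h : nat) : nat :=
  #|[set t : 'I_(2 ^ n) | h <= freq_mod w p r t]|.

Definition primes_in (P : nat) : seq nat :=
  [seq q <- iota P P.+1 | prime q].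

(* Probability, over uniform prime p in [P,2P] and then uniform r* in Z_p,
   that at least k integers t have #{S in B_{r*} : w(S) = t} >= h. *)
Definition success_prob (R : realType) (n : nat) (w : 'I_n -> nat)
    (P h : nat) (k : int) : R :=
  ((size (primes_in P))%:R)^-1 *
  \sum_(p <- primes_in P)
     ((#|[set r : 'I_p | k <= (num_good_t w p r h)%:Z]|)%:R / p%:R).

(* Main.v *)
Require Import Defs.
From HB Require Import structures.
From mathcomp Require Import all_boot all_order all_algebra.
From mathcomp Require Import reals.
From mathcomp Require Import zify ring lra.
Import Order.TTheory GRing.Theory Num.Theory.
Set Implicit Arguments. Unset Strict Implicit. Unset Printing Implicit Defensive.

(* Proof strategy: quantitative Bertrand (Chebyshev-type) bound
   on the number of primes in [P,2P] via Erdos' central binomial argument,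
   then a second-moment (Cauchy-Schwarz) argument over residues mod p. *)

Lemma sum01_le (t : nat -> nat) e b :
  (forall k, t k <= 1) -> (forall k, e < k -> t k = 0) ->
  \sum_(1 <= k < b) t k <= e.
Proof.
move=> t1 t0.
suff: \sum_(1 <= k < b) t k <= minn b.-1 e by move=> H; apply: leq_trans H (geq_minr _ _).
elim: b => [|b IH]; first by rewrite big_geq.
case: b IH => [|b] IH; first by rewrite big_geq.
rewrite big_nat_recr //=.
case: (leqP b.+1 e) => hb.
  have := t1 b.+1; move: IH => /=; lia.
rewrite t0 // addn0; move: IH => /=; lia.
Qed.

Lemma coprime_fact p m : prime p -> m < p -> coprime p m`!.
Proof.
move=> pp; elim: m => [|m IH] hm; first by rewrite coprimen1.
rewrite factS coprimeMr IH ?andbT; last by apply: ltnW.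
by rewrite prime_coprime // gtnNdvd.
Qed.

Lemma prod_primes_dvd (s : seq nat) D :
  uniq s -> all prime s -> all (fun p => p %| D) s -> \prod_(p <- s) p %| D.
Proof.
elim: s => [|p s IH] /=; first by rewrite big_nil dvd1n.
move=> /andP[ps us] /andP[pp aps] /andP[pD asD].
rewrite big_cons Gauss_dvd ?pD ?IH //.
rewrite prime_coprime // Euclid_dvd_prod //.
elim: s ps aps {IH us asD} => [|q s IH] /=; first by rewrite big_nil.
rewrite in_cons negb_or => /andP[pq ps] /andP[qp aps].
rewrite big_cons negb_or IH // andbT.
by rewrite dvdn_prime2 // eq_sym.
Qed.
Lemma expn_gt0_p p k : 0 < p -> 0 < p ^ k. Proof. by move=> h; rewrite expn_gt0 h. Qed.

Definition tk P p k := P.*2 %/ p ^ k - (P %/ p ^ k).*2.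

Lemma tk_facts P q : 0 < q ->
  (P %/ q).*2 <= P.*2 %/ q /\ P.*2 %/ q <= (P %/ q).*2 + 1.
Proof.
move=> q0; split.
  rewrite leq_divRL //. have := leq_divM P q. lia.
rewrite -ltnS (_ : ((P %/ q).*2 + 1).+1 = (P %/ q).*2 + 2); last lia.
rewrite ltn_divLR //.
have := ltn_ceil P q0. nia.
Qed.

Lemma logn_binom P p : prime p ->
  logn p 'C(P.*2, P) = \sum_(1 <= k < P.*2.+1) tk P p k.
Proof.
move=> pp.
have p0 := prime_gt0 pp.
have hf := bin_fact (leq_addl P P : P <= P + P).
rewrite addnK addnn in hf.
have C0 : 0 < 'C(P.*2, P) by rewrite bin_gt0 -addnn leq_addl.
have := congr1 (logn p) hf.
rewrite !lognM ?fact_gt0 ?muln_gt0 ?fact_gt0 // !logn_fact //.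
have ext : \sum_(1 <= k < P.+1) P %/ p ^ k = \sum_(1 <= k < P.*2.+1) P %/ p ^ k.
  rewrite [RHS](big_cat_nat _ (n := P.+1)) //=; last lia.
  rewrite [X in _ = _ + X]big1_seq ?addn0 // => k /andP[_]; rewrite mem_iota => /andP[hk _].
  rewrite divn_small //; apply: leq_trans hk _; apply: ltnW.
  apply: leq_trans (ltn_expl k (prime_gt1 pp)); done.
rewrite ext.
have split : \sum_(1 <= k < P.*2.+1) P.*2 %/ p ^ k =
   \sum_(1 <= k < P.*2.+1) tk P p k + \sum_(1 <= k < P.*2.+1) P %/ p ^ k
     + \sum_(1 <= k < P.*2.+1) P %/ p ^ k.
  rewrite -!big_split /=; apply: eq_bigr => k _.
  have [h1 _] := tk_facts P (expn_gt0_p k p0); rewrite /tk. lia.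
rewrite split. lia.
Qed.

Lemma tk_le1 P p k : 0 < p -> tk P p k <= 1.
Proof. move=> p0; have [h1 h2] := tk_facts P (expn_gt0_p k p0); rewrite /tk; lia. Qed.

Lemma tk_0 P p k : 0 < p -> P.*2 < p ^ k -> tk P p k = 0.
Proof.
move=> p0 h; have h' : P < p ^ k by apply: leq_ltn_trans h; lia.
by rewrite /tk (divn_small h) (divn_small h').
Qed.

Lemma binom_pow_le P p : prime p -> 0 < P -> p ^ logn p 'C(P.*2, P) <= P.*2.
Proof.
move=> pp P0; have p1 := prime_gt1 pp; have p0 := prime_gt0 pp.
set e := trunc_log p P.*2.
have he : logn p 'C(P.*2, P) <= e.
  rewrite logn_binom //; apply: sum01_le => k; first exact: tk_le1.
  move=> ek; apply: tk_0 => //; apply: leq_trans (trunc_log_ltn _ p1) _.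
  by rewrite leq_pexp2l.
apply: leq_trans (trunc_logP p1 _); last lia.
by rewrite leq_pexp2l.
Qed.

Lemma binom_log_le1 P p : prime p -> P.*2 < p * p -> logn p 'C(P.*2, P) <= 1.
Proof.
move=> pp hp; have p0 := prime_gt0 pp.
rewrite logn_binom //; apply: sum01_le => k; first exact: tk_le1.
move=> k1; apply: tk_0 => //; apply: leq_trans hp _.
by rewrite mulnn leq_pexp2l.
Qed.

Lemma binom_log_0 P p : prime p -> P.*2 < p * p -> p <= P -> P.*2 < 3 * p ->
  logn p 'C(P.*2, P) = 0.
Proof.
move=> pp hp hpP h3; have p0 := prime_gt0 pp.
apply/eqP; rewrite -leqn0.
rewrite logn_binom //; apply: sum01_le => k; first exact: tk_le1.
case: k => [//|[|k]] _; last first.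
  apply: tk_0 => //; apply: leq_trans hp _.
  by rewrite mulnn leq_pexp2l.
rewrite /tk expn1.
have a1 : 1 <= P %/ p by rewrite leq_divRL // mul1n.
have a2 : P %/ p < 2 by rewrite ltn_divLR //; lia.
have b1 : 2 <= P.*2 %/ p by rewrite leq_divRL //; lia.
have b2 : P.*2 %/ p < 3 by rewrite ltn_divLR //; lia.
lia.
Qed.

Definition pr x := \prod_(0 <= p < x.+1 | prime p) p.

Lemma central_le m : 'C(m.*2.+1, m) <= 4 ^ m.
Proof.
have e : 2 ^ (m.*2.+1) = \sum_(0 <= i < m.*2.+2) 'C(m.*2.+1, i).
  rewrite -{1}[2]/(1+1) expnDn big_mkord; apply: eq_bigr => i _.
  by rewrite !exp1n !muln1.
have hs : 'C(m.*2.+1, m.+1) = 'C(m.*2.+1, m).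
  rewrite -bin_sub; last lia. congr 'C(_, _); lia.
have : 'C(m.*2.+1, m) + 'C(m.*2.+1, m.+1) <= 2 ^ (m.*2.+1).
  rewrite e (big_cat_nat _ (n := m)) //; last lia.
  rewrite (@big_ltn _ _ _ m); last lia.
  rewrite (@big_ltn _ _ _ m.+1); last lia.
  set a := \sum_(0 <= i < m) _; set b := \sum_(m.+2 <= i < _) _.
  simpl; lia.
rewrite hs expnS -[4]/(2^2) -expnM mul2n. lia.
Qed.

Lemma prime_dvd_central m p : prime p -> m.+1 < p -> p <= m.*2.+1 ->
  p %| 'C(m.*2.+1, m).
Proof.
move=> pp h1 h2.
have hf := bin_fact (_ : m <= m.*2.+1).
have e : m.*2.+1 - m = m.+1 by lia.
rewrite e in hf.
rewrite -(@Gauss_dvdl _ _ (m`! * m.+1`!)); last first.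
  by rewrite coprimeMr !coprime_fact //; lia.
rewrite hf ?dvdn_fact //; [apply/andP; split; [exact: prime_gt0|done] | lia].
Qed.

Lemma primorial x : pr x <= 4 ^ x.
Proof.
elim/ltn_ind: x => x IH.
case: (leqP x 2) => hx.
  by case: x IH hx => [|[|[|]]] IH hx //; rewrite /pr unlock.
have := odd_double_half x.
set m := x./2.
case ox: (odd x) => /= ex.
  have m1 : 1 <= m by lia.
  have -> : x = m.*2.+1 by lia.
  rewrite /pr (big_cat_nat _ (n := m.+2)) //; last lia.
  have h1 := IH m.+1 (ltac:(lia)).
  have h2 : \prod_(m.+2 <= i < m.*2.+2 | prime i) i <= 'C(m.*2.+1, m).
    rewrite -big_filter; apply: dvdn_leq; first by rewrite bin_gt0; lia.
    apply: prod_primes_dvd.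
    - by apply: filter_uniq; apply: iota_uniq.
    - exact: filter_all.
    - apply/allP => p; rewrite mem_filter mem_index_iota => /andP[pp /andP[a b]].
      apply: prime_dvd_central => //; lia.
  have h3 := central_le m.
  rewrite /pr in h1.
  have -> : 4 ^ m.*2.+1 = 4 ^ m.+1 * 4 ^ m by rewrite -expnD; congr (_ ^ _); lia.
  by apply: leq_mul => //; apply: leq_trans h3.
have -> : x = x.-1.+1 by lia.
rewrite /pr big_mkcond big_nat_recr //= -big_mkcond /=.
have np : prime x.-1.+1 = false.
  apply/negP => /even_prime [] h; [lia|].
  have : x.-1.+1 = x by lia.
  by move=> e; rewrite e ox in h.
rewrite np muln1.
apply: leq_trans (IH x.-1 _) _; first lia.
by rewrite leq_exp2l.
Qed.

Lemma expn_monoL m n e : m <= n -> m ^ e <= n ^ e.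
Proof. by case: e => [//|e] h; rewrite leq_exp2r. Qed.

Lemma logn_nonprime p n : ~~ prime p -> logn p n = 0.
Proof. by move=> h; rewrite lognE (negbTE h). Qed.

Lemma central2 P : 0 < P -> 4 ^ P <= P.*2 * 'C(P.*2, P).
Proof.
elim: P => [//|P IH] _.
case: P IH => [|P] IH; first by [].
have IH' := IH isT.
set Q := P.+1 in IH' *.
have e1 : 'C(Q.*2.+2, Q.+1) = 'C(Q.*2.+1, Q.+1) + 'C(Q.*2.+1, Q) by rewrite binS.
have e2 : 'C(Q.*2.+1, Q.+1) = 'C(Q.*2.+1, Q).
  rewrite -bin_sub; last lia. congr 'C(_, _); lia.
have e3 := mul_bin_diag Q.*2.+1 Q.
rewrite /= e2 in e3.
have -> : Q.+1.*2 = Q.*2.+2 by lia.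
rewrite e1 e2 expnS.
nia.
Qed.

Lemma prod_logn_cut n b : 0 < n -> (forall p, b <= p -> logn p n = 0) ->
  n = \prod_(0 <= p < b) p ^ logn p n.
Proof.
move=> n0 hb.
have e : n = \prod_(0 <= p < n.+1) p ^ logn p n.
  by rewrite -{1}(partnT n0) /partn big_mkcond /=.
have ext : forall c, (forall p, c <= p -> logn p n = 0) -> forall k,
    \prod_(0 <= p < c) p ^ logn p n = \prod_(0 <= p < c + k) p ^ logn p n.
  move=> c hc k; rewrite [RHS](big_cat_nat _ (n := c)) //; last lia.
  rewrite [X in _ = _ * X]big1_seq ?muln1 // => p /andP[_]; rewrite mem_index_iota.
  by move=> /andP[h _]; rewrite hc.
have hn : forall p, n.+1 <= p -> logn p n = 0 by move=> p h; apply: ltn_log0.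
case: (leqP b n.+1) => h.
  rewrite {1}e; have -> : n.+1 = b + (n.+1 - b) by lia.
  by rewrite -ext.
rewrite {1}e; have -> : b = n.+1 + (b - n.+1) by lia.
by rewrite -ext.
Qed.

Lemma G_bound a : 7 <= a -> 3 * (a.*2 + 4) * (1 + 2 ^ (a + 2)) <= 2 ^ (a.*2 + 1).
Proof.
move=> ha; have -> : a = 7 + (a - 7) by lia.
elim: (a - 7) => [|b IH]; first by [].
have e1 : 2 ^ (7 + b.+1 + 2) = 2 * 2 ^ (7 + b + 2) by rewrite -expnS; congr (_ ^ _); lia.
have e2 : 2 ^ ((7 + b.+1).*2 + 1) = 4 * 2 ^ ((7 + b).*2 + 1).
  by rewrite -[4]/(2^2) -expnD; congr (_ ^ _); lia.
rewrite e1 e2.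
move: IH; set y := 2 ^ (7 + b + 2); set z := 2 ^ ((7 + b).*2 + 1).
have -> : (7 + b.+1).*2 = (7 + b).*2 + 2 by lia.
nia.
Qed.

Lemma s_bound l : 15 <= l -> 3 * (l + 2) * (1 + 2 ^ (l./2 + 2)) <= 2 ^ l.
Proof.
move=> hl.
have := odd_double_half l.
case ol: (odd l) => /= e.
  have h7 : 7 <= l./2 by lia.
  have h := G_bound h7; move: h; have -> : l./2.*2 + 1 = l by lia.
  move=> h; apply: leq_trans _ h; apply: leq_mul => //; lia.
set a := l./2.-1.
have ea : l./2 = a.+1 by lia.
have h7 : 7 <= a by lia.
have h := G_bound h7; move: h.
rewrite ea.
have -> : l = (a.*2 + 1).+1 by lia.
rewrite expnS.
have -> : (a.+1 + 2) = (a + 2).+1 by lia.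
rewrite expnS.
move=> h; apply: leq_trans (_ : _ <= 2 * (3 * (a.*2 + 4) * (1 + 2 ^ (a + 2)))) _.
  set y := 2 ^ (a + 2). have -> : (a.*2 + 1).+1 + 2 = a.*2 + 4 by lia. nia.
by rewrite leq_mul2l.
Qed.

Lemma prod_const_seq (r : seq nat) c : \prod_(i <- r) c = c ^ size r.
Proof. by elim: r => [|x r IH]; rewrite ?big_nil ?big_cons ?IH ?expnS. Qed.

Lemma cheb_large P : 2 ^ 15 <= P -> P <= 3 * (trunc_log 2 P + 2) * size (primes_in P).
Proof.
move=> hP.
have e15 : 2 ^ 15 = 32768 by [].
have P0 : 0 < P by lia.
set l := trunc_log 2 P.
have hl1 : 2 ^ l <= P := trunc_logP (isT : 1 < 2) P0.
have hl2 : P < 2 ^ l.+1 := trunc_log_ltn P (isT : 1 < 2).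
have hl15 : 15 <= l := trunc_log_max (isT : 1 < 2) hP.
set s := 2 ^ (l./2 + 2).
have hsb := s_bound hl15; rewrite -/s in hsb.
have hss : P.*2 < s * s.
  apply: leq_trans (_ : P.*2.+1 <= 2 ^ l.+2) _.
    by rewrite expnS; lia.
  rewrite /s -expnD leq_exp2l //.
  have := odd_double_half l; have := leq_b1 (odd l); lia.
set d := (P.*2 %/ 3).+1.
have hsd : s <= d.
  have : 3 * (1 + s) <= 3 * (l + 2) * (1 + s) by apply: leq_mul => //; lia.
  lia.
have hdP : d <= P.+1 by lia.
set C := 'C(P.*2, P).
have C0 : 0 < C by rewrite bin_gt0; lia.
have hC := @prod_logn_cut C P.*2.+1 C0.
have {hC} hC : C = \prod_(0 <= p < P.*2.+1) p ^ logn p C.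
  apply: hC => p hp; case pp: (prime p); last by rewrite logn_nonprime ?pp.
  have := binom_pow_le pp P0; rewrite -/C.
  case: (logn p C) => [//|e] h.
  have := leq_pexp2l (prime_gt0 pp) (isT : 1 <= e.+1); rewrite expn1.
  lia.
have h1 : s <= P.*2.+1 by lia.
have h2 : s <= d <= P.*2.+1 by apply/andP; split; lia.
have h3 : d <= P.+1 <= P.*2.+1 by apply/andP; split; lia.
rewrite (big_cat_nat (n := s) (leq0n s) h1) in hC.
rewrite (big_cat_nat (n := d) (proj1 (andP h2)) (proj2 (andP h2))) in hC.
rewrite (big_cat_nat (n := P.+1) (proj1 (andP h3)) (proj2 (andP h3))) in hC.
simpl in hC.
have hI : \prod_(0 <= p < s) p ^ logn p C <= (P.*2) ^ s.
  apply: leq_trans (leq_prod (E2 := fun _ => P.*2) _) _.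
    move=> p _; case pp: (prime p); first exact: binom_pow_le.
    by rewrite logn_nonprime ?pp //; lia.
  by rewrite prod_nat_const_nat subn0.
have hII : \prod_(s <= p < d) p ^ logn p C <= 4 ^ (P.*2 %/ 3).
  rewrite big_seq.
  apply: leq_trans (leq_prod (E2 := fun p => if prime p then p else 1) _) _.
    move=> p; rewrite mem_index_iota => /andP[hp1 hp2].
    case pp: (prime p); last by rewrite logn_nonprime ?pp.
    have : logn p C <= 1.
      apply: binom_log_le1 => //; apply: leq_trans hss _; apply: leq_mul; lia.
    case: (logn p C) => [|[|]] //= _; by [rewrite prime_gt0 | rewrite expn1].
  rewrite -big_seq -big_mkcond /=.
  apply: leq_trans (primorial _); rewrite /pr.
  rewrite [X in _ <= X](big_cat_nat (n := s) (leq0n s) hsd) /=.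
  apply: leq_pmull; apply: prodn_cond_gt0 => p; exact: prime_gt0.
have hIII : \prod_(d <= p < P.+1) p ^ logn p C = 1.
  apply: big1_seq => p; rewrite mem_index_iota => /andP[_ /andP[hp1 hp2]].
  case pp: (prime p); last by rewrite logn_nonprime ?pp.
  rewrite binom_log_0 //; try lia.
  apply: leq_trans hss _; apply: leq_mul; lia.
have hIV : \prod_(P.+1 <= p < P.*2.+1) p ^ logn p C <= (P.*2) ^ size (primes_in P).
  apply: leq_trans (leq_prod (E2 := fun p => if prime p then P.*2 else 1) _) _.
    move=> p _; case pp: (prime p); first exact: binom_pow_le.
    by rewrite logn_nonprime ?pp.
  apply: leq_trans (_ : _ <= \prod_(P <= p < P.*2.+1) (if prime p then P.*2 else 1)) _.
    rewrite [X in _ <= X](big_ltn); last lia.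
    apply: leq_pmull; case: (prime P) => //; lia.
  rewrite -big_mkcond /= /index_iota (_ : P.*2.+1 - P = P.+1); last lia.
  by rewrite -big_filter prod_const_seq.
have hc := central2 P0; rewrite -/C in hc.
set N := size (primes_in P) in hIV *.
have hb : P.*2 <= 2 ^ (l + 2) by rewrite expnD; move: hl2; rewrite expnS; lia.
move: (l + 2) hb hsb => A hb hsb.
have key : 2 ^ (P.*2) <= 2 ^ (A + A * s + (P.*2 %/ 3).*2 + A * N).
  have e4 : forall x, 4 ^ x = 2 ^ (x.*2).
    by move=> x; rewrite -[4]/(2^2) -expnM mul2n.
  have bnd : forall k, (P.*2) ^ k <= 2 ^ (A * k).
    by move=> k; rewrite expnM; apply: expn_monoL.
  rewrite -e4 !expnD -!mulnA.
  apply: leq_trans hc _.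
  rewrite hC hIII mul1n.
  apply: leq_mul => //.
  apply: leq_mul; first exact: leq_trans hI (bnd s).
  rewrite -e4; apply: leq_mul => //.
  exact: leq_trans hIV (bnd N).
rewrite leq_exp2l // in key.
nia.
Qed.

Lemma primes_in_pos P q : prime q -> P <= q <= P.*2 -> 0 < size (primes_in P).
Proof.
move=> pq /andP[h1 h2].
rewrite /primes_in size_filter -has_count; apply/hasP; exists q => //.
rewrite mem_iota; apply/andP; split => //; lia.
Qed.

Lemma bertrand_small P : 2 <= P -> P < 2 ^ 15 -> 0 < size (primes_in P).
Proof.
move=> hP2 h15.
have e15 : 2 ^ 15 = 4000 * 8 + 768 by [].
have E5749 : 5749 = 4000 + 1749 by [].
have E11497 : 11497 = 4000 + 4000 + 3497 by [].
have E22993 : 22993 = 4000 + 4000 + 4000 + 4000 + 4000 + 2993 by [].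
have E45979 : 45979 = 4000 + 4000 + 4000 + 4000 + 4000 + 4000 + 4000 + 4000 + 4000 + 4000 + 4000 + 1979 by [].
case: (leqP P 2) => hq2.
  by apply: (@primes_in_pos P 2); [vm_compute; reflexivity | apply/andP; split; lia].
case: (leqP P 5) => hq5.
  by apply: (@primes_in_pos P 5); [vm_compute; reflexivity | apply/andP; split; lia].
case: (leqP P 11) => hq11.
  by apply: (@primes_in_pos P 11); [vm_compute; reflexivity | apply/andP; split; lia].
case: (leqP P 23) => hq23.
  by apply: (@primes_in_pos P 23); [vm_compute; reflexivity | apply/andP; split; lia].
case: (leqP P 47) => hq47.
  by apply: (@primes_in_pos P 47); [vm_compute; reflexivity | apply/andP; split; lia].
case: (leqP P 89) => hq89.
  by apply: (@primes_in_pos P 89); [vm_compute; reflexivity | apply/andP; split; lia].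
case: (leqP P 179) => hq179.
  by apply: (@primes_in_pos P 179); [vm_compute; reflexivity | apply/andP; split; lia].
case: (leqP P 359) => hq359.
  by apply: (@primes_in_pos P 359); [vm_compute; reflexivity | apply/andP; split; lia].
case: (leqP P 719) => hq719.
  by apply: (@primes_in_pos P 719); [vm_compute; reflexivity | apply/andP; split; lia].
case: (leqP P 1439) => hq1439.
  by apply: (@primes_in_pos P 1439); [vm_compute; reflexivity | apply/andP; split; lia].
case: (leqP P 2879) => hq2879.
  by apply: (@primes_in_pos P 2879); [vm_compute; reflexivity | apply/andP; split; lia].
case: (leqP P 5749) => hq5749.
  by apply: (@primes_in_pos P 5749); [vm_compute; reflexivity | apply/andP; split; lia].
case: (leqP P 11497) => hq11497.
  by apply: (@primes_in_pos P 11497); [vm_compute; reflexivity | apply/andP; split; lia].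
case: (leqP P 22993) => hq22993.
  by apply: (@primes_in_pos P 22993); [vm_compute; reflexivity | apply/andP; split; lia].
case: (leqP P 45979) => hq45979.
  by apply: (@primes_in_pos P 45979); [vm_compute; reflexivity | apply/andP; split; lia].
lia.
Qed.

Lemma cheb P : 2 <= P -> P <= 2 ^ 15 * (trunc_log 2 P + 2) * size (primes_in P).
Proof.
move=> hP2.
case: (leqP (2 ^ 15) P) => hh.
  apply: leq_trans (cheb_large hh) _.
  by apply: leq_mul => //; apply: leq_mul.
have := bertrand_small hP2 hh.
have e15 : 2 ^ 15 = 4000 * 8 + 768 by [].
set N := size _; set l := trunc_log 2 P.
nia.
Qed.

Definition Xs n (w : 'I_n -> nat) j : {set 'I_(2 ^ n)} :=
  [set t : 'I_(2 ^ n) | 2 ^ j < freq w t].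

Definition cnt n (w : 'I_n -> nat) j p (r : nat) :=
  #|[set t in Xs w j | t %% p == r]|.

Lemma cnt_le n (w : 'I_n -> nat) j p r :
  cnt w j p r <= num_good_t w p r (2 ^ j + 1).
Proof.
apply: subset_leq_card; apply/subsetP => t; rewrite !inE => /andP[ht /eqP tr].
have -> : freq_mod w p r t = freq w t.
  rewrite /freq_mod /freq; apply: eq_card => S; rewrite !inE.
  case e: (wS w S == t) => //=; by rewrite (eqP e) tr eqxx.
by rewrite addn1.
Qed.

Lemma cnt_sum n (w : 'I_n -> nat) j p : 0 < p ->
  \sum_(r < p) cnt w j p r = num_heavy w j.
Proof.
move=> p0.
rewrite /cnt /num_heavy -/(Xs w j).
have ce : forall r, #|[set t in Xs w j | t %% p == r]| = \sum_(t in Xs w j) (t %% p == r).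
  move=> r; rewrite -sum1_card big_mkcond [RHS]big_mkcond /=; apply: eq_bigr => t _.
  rewrite [t \in [set _ in _ | _]]inE; case: (t \in Xs w j) => //=; by case: (t %% p == r).
under eq_bigr => r _ do rewrite ce.
rewrite exchange_big /= -sum1_card; apply: eq_bigr => t _.
rewrite (bigD1 (Ordinal (ltn_pmod t p0))) //= big1 ?addn0 //.
  by rewrite eqxx.
move=> r hr; case: eqP => // e; exfalso; move/eqP: hr; apply.
by apply: val_inj => /=; rewrite e.
Qed.

Lemma cnt_E n (w : 'I_n -> nat) j p r :
  cnt w j p r = \sum_(t in Xs w j) (t %% p == r).
Proof.
rewrite /cnt -sum1_card big_mkcond [RHS]big_mkcond /=; apply: eq_bigr => t _.
rewrite [t \in [set _ in _ | _]]inE; case: (t \in Xs w j) => //=; by case: (t %% p == r).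
Qed.

Lemma cnt_sq n (w : 'I_n -> nat) j p : 0 < p ->
  \sum_(r < p) (cnt w j p r) ^ 2 =
  \sum_(t in Xs w j) \sum_(t' in Xs w j) (t %% p == t' %% p).
Proof.
move=> p0.
rewrite (eq_bigr (fun r : 'I_p => cnt w j p r * cnt w j p r)); last by move=> r _; rewrite mulnn.
under eq_bigr => r _ do rewrite cnt_E big_distrlr /=.
rewrite exchange_big /=; apply: eq_bigr => t _.
rewrite exchange_big /=; apply: eq_bigr => t' _.
rewrite (bigD1 (Ordinal (ltn_pmod t p0))) //= big1 ?addn0 //.
  by rewrite eqxx mul1n eq_sym.
move=> r hr; case: eqP => // e; exfalso; move/eqP: hr; apply.
by apply: val_inj => /=; rewrite e.
Qed.

Lemma sum_bool_count (ps : seq nat) (b : pred nat) :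
  \sum_(p <- ps) (b p : nat) = count b ps.
Proof. by rewrite -sum1_count [RHS]big_mkcond /=; apply: eq_bigr => p _; case: (b p). Qed.

Lemma T_bound n (w : 'I_n -> nat) j (ps : seq nat) L :
  (forall p, p \in ps -> 0 < p) ->
  (forall t t' : 'I_(2 ^ n), t != t' -> count (fun p => t %% p == t' %% p) ps <= L) ->
  \sum_(p <- ps) \sum_(r < p) (cnt w j p r) ^ 2 <=
    num_heavy w j * (size ps + num_heavy w j * L).
Proof.
move=> hp hL.
rewrite (eq_big_seq (fun p => \sum_(t in Xs w j) \sum_(t' in Xs w j) (t %% p == t' %% p))); last first.
  by move=> p pin; rewrite cnt_sq ?hp.
rewrite exchange_big /=.
rewrite /num_heavy -/(Xs w j) -sum_nat_const; apply: leq_sum => t tX.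
rewrite exchange_big /=.
rewrite (bigD1 t) //=; apply: leq_add.
  by rewrite sum_bool_count count_size.
apply: leq_trans (_ : _ <= \sum_(t' in Xs w j) L) _; last by rewrite sum_nat_const.
rewrite [X in X <= _]big_mkcond [X in _ <= X]big_mkcond /=; apply: leq_sum => t' _.
case: (t' \in Xs w j) => //=; case: eqP => //= ne.
rewrite sum_bool_count; apply: hL; apply/eqP => e; apply: ne; by rewrite e.
Qed.

Lemma count_mod_bound n P (ps : seq nat) (t t' : nat) :
  0 < P -> uniq ps -> all prime ps -> (forall p, p \in ps -> P <= p) ->
  t != t' -> t < 2 ^ n -> t' < 2 ^ n ->
  count (fun p => t %% p == t' %% p) ps * trunc_log 2 P < n.
Proof.
move=> P0 ups aps hP.
have key : forall a b, b < a -> a < 2 ^ n ->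
    count (fun p => a %% p == b %% p) ps * trunc_log 2 P < n.
  move=> a b ba an.
  rewrite -size_filter; set fs := filter _ ps.
  have hdiv : \prod_(p <- fs) p %| a - b.
    apply: prod_primes_dvd; first exact: filter_uniq.
      apply/allP => p; rewrite mem_filter => /andP[_ pin]; exact: (allP aps).
    apply/allP => p; rewrite mem_filter => /andP[e _].
    by rewrite -eqn_mod_dvd // ltnW.
  have hle : P ^ size fs <= \prod_(p <- fs) p.
    rewrite -prod_const_seq big_seq [X in _ <= X]big_seq; apply: leq_prod => p.
    by rewrite mem_filter => /andP[_ pin]; apply: hP.
  have h2 : 2 ^ (trunc_log 2 P * size fs) <= P ^ size fs.
    by rewrite expnM; apply: expn_monoL; apply: trunc_logP.
  have hab : \prod_(p <- fs) p <= a - b by apply: dvdn_leq => //; rewrite subn_gt0.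
  rewrite mulnC -(ltn_exp2l _ _ (isT : 1 < 2)).
  apply: leq_ltn_trans h2 _; apply: leq_ltn_trans hle _; apply: leq_ltn_trans hab _.
  lia.
move=> ne tn t'n.
case: (ltngtP t t') => h.
- rewrite (eq_count (a2 := fun p => t' %% p == t %% p)); first exact: key.
  by move=> p /=; rewrite eq_sym.
- exact: key.
- by rewrite h eqxx in ne.
Qed.

Local Open Scope ring_scope.

Lemma perp (R : realFieldType) p (c : 'I_p -> nat) (k : int) (x : nat) (mu : R) :
  (0 < p)%N -> 1 <= k -> (\sum_(r < p) c r)%N = x ->
  p%:R * (k - 1)%:~R <= x%:R / 2 :> R -> 0 <= mu ->
  mu * x%:R - mu ^+ 2 * (\sum_(r < p) (c r) ^ 2)%N%:R
    <= (#|[set r : 'I_p | k <= (c r)%:Z]|)%:R.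
Proof.
move=> p0 k1 hx hpk mu0.
set g := fun r : 'I_p => k <= (c r)%:Z.
set Sg := \sum_(r < p | g r) ((c r)%:R : R).
set Qg := \sum_(r < p | g r) ((c r)%:R ^+ 2 : R).
have hA : (#|[set r : 'I_p | k <= (c r)%:Z]|)%:R = \sum_(r < p | g r) (1 : R).
  by rewrite sumr_const cardsE.
have H0 : 0 <= \sum_(r < p | g r) (1 - mu * (c r)%:R) ^+ 2.
  by apply: sumr_ge0 => r _; apply: sqr_ge0.
have E : \sum_(r < p | g r) (1 - mu * (c r)%:R) ^+ 2 =
    \sum_(r < p | g r) (1 : R) - 2 * mu * Sg + mu ^+ 2 * Qg.
  rewrite (eq_bigr (fun r => (1 - (2 * mu) * (c r)%:R) + mu ^+ 2 * (c r)%:R ^+ 2)).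
    by rewrite big_split /= sumrB -!mulr_sumr.
  move=> r _; ring.
have hQ : Qg <= (\sum_(r < p) (c r) ^ 2)%N%:R.
  rewrite natr_sum /Qg big_mkcond /=; apply: ler_sum => r _.
  by case: (g r); rewrite ?natrX // exprn_ge0.
have hS : x%:R / 2 <= Sg.
  have hsplit : (x%:R : R) = Sg + \sum_(r < p | ~~ g r) ((c r)%:R : R).
    by rewrite -hx natr_sum (bigID g).
  have hb : \sum_(r < p | ~~ g r) ((c r)%:R : R) <= p%:R * (k - 1)%:~R.
    rewrite big_mkcond /=.
    apply: le_trans (_ : _ <= \sum_(r < p) ((k - 1)%:~R : R)) _.
      apply: ler_sum => r _; case: ifP => hg.
        have : (c r)%:Z <= k - 1.
          by rewrite -ltzD1 subrK ltNge; apply/negP => h; move: hg; rewrite /g h.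
        by rewrite -(ler_int R) => h; apply: le_trans h.
      by rewrite ler0z subr_ge0.
    by rewrite sumr_const card_ord mulr_natl.
  lra.
have hmu : mu * (x%:R / 2) <= mu * Sg by apply: ler_wpM2l.
have hmu2 : mu ^+ 2 * Qg <= mu ^+ 2 * (\sum_(r < p) (c r) ^ 2)%N%:R.
  by apply: ler_wpM2l => //; apply: sqr_ge0.
rewrite hA; nra.
Qed.

Lemma mu_alg (R : realFieldType) (NN XX LL T SA : R) :
  0 < NN -> 0 < XX -> 0 <= LL -> NN <= 3 * XX -> T <= XX * (NN + XX * LL) ->
  (forall mu, 0 <= mu -> mu * XX * NN - mu ^+ 2 * T <= SA) ->
  NN ^+ 2 / (4 * (3 + LL)) <= SA.
Proof.
move=> N0 X0 L0 NX hT H.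
have D0 : 0 < 3 + LL by lra.
set mu := NN / (2 * XX * (3 + LL)).
have mu0 : 0 <= mu by rewrite /mu divr_ge0 // ?ltW // !mulr_gt0.
have hT2 : T <= XX ^+ 2 * (3 + LL).
  apply: le_trans hT _; rewrite expr2 -mulrA; apply: ler_wpM2l; [lra | rewrite mulrDr; lra].
have hm2 : mu ^+ 2 * T <= mu ^+ 2 * (XX ^+ 2 * (3 + LL)).
  by apply: ler_wpM2l => //; apply: sqr_ge0.
have E : mu * XX * NN - mu ^+ 2 * (XX ^+ 2 * (3 + LL)) = NN ^+ 2 / (4 * (3 + LL)).
  rewrite /mu; field; apply/andP; split; apply: lt0r_neq0 => //; lra.
rewrite -E; apply: le_trans (H mu mu0); lra.
Qed.

Lemma final_alg (R : realFieldType) (NN PP LL nn SA SG K : R) :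
  0 < NN -> 0 < PP -> 0 <= LL -> 0 < nn -> 0 < K ->
  SA / (2 * PP) <= SG -> NN ^+ 2 / (4 * (3 + LL)) <= SA ->
  8 * PP * (3 + LL) <= K * nn * NN -> K^-1 / nn <= NN^-1 * SG.
Proof.
move=> N0 P0 L0 n0 K0 hG hA hK.
have D0 : 0 < 3 + LL by lra.
have h1 : NN ^+ 2 / (4 * (3 + LL)) / (2 * PP) <= SG.
  apply: le_trans hG; apply: ler_wpM2r => //; rewrite invr_ge0; lra.
have h2 : NN ^+ 2 / (4 * (3 + LL)) / (2 * PP) = NN ^+ 2 / (8 * PP * (3 + LL)).
  field; apply/andP; split; apply: lt0r_neq0 => //; lra.
rewrite h2 ler_pdivrMr in h1; last by rewrite !mulr_gt0.
have SG0 : 0 <= SG.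
  apply: le_trans hG; apply: divr_ge0; last lra.
  apply: le_trans hA; apply: divr_ge0; [apply: sqr_ge0 | lra].
have h3 : NN <= SG * K * nn by nra.
have -> : K^-1 / nn = (K * nn)^-1 by rewrite invfM.
rewrite -[X in X <= _]div1r ler_pdivrMr ?mulr_gt0 // -mulrA ler_pdivlMl //; lra.
Qed.

Lemma sumr_const_seq' (R : ringType) (s : seq nat) (c : R) :
  \sum_(i <- s) c = c * (size s)%:R.
Proof.
elim: s => [|a s IH]; first by rewrite big_nil mulr0.
by rewrite big_cons IH /= mulrSr mulrDr mulr1 addrC.
Qed.

Theorem lemma3p6 :
  exists c : rat, 0 < c /\
  forall (R : realType) (n : nat) (w : 'I_n -> nat) (Delta : R) (j P : nat),
    (forall i : 'I_n, (0 < w i)%N) ->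
    (forall i i' : 'I_n, (i < i')%N -> (w i < w i')%N) ->
    (\sum_(i < n) w i < 2 ^ n - 1)%N ->
    Num.sqrt (2 ^+ n) <= Delta ->
    Delta <= (dpar w)%:R ->
    (dpar w < 2 ^ n)%N ->
    (j < n)%N ->
    Delta / (2 ^ j.+1 * n)%:R < (num_heavy w j)%:R ->
    let h := (2 ^ j + 1)%N in
    let m : int := Num.ceil (Delta / (2 ^ j.+1 * n)%:R) in
    (2 <= P)%N ->
    (P%:Z <= 2 * m) ->
    let k : int := Num.ceil (m%:~R / (4 * P%:R) : R) in
    ratr c / n%:R <= success_prob R w P h k.
Proof.
exists ((120 * 2 ^ 15)%:R)^-1; split; first by rewrite invr_gt0 ltr0n.
move=> R n w Delta j P _ _ _ _ _ _ hj hheavy h m hP2 hPm.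
cbv zeta.
set k := Num.ceil _.

rewrite (_ : ratr _ = ((120 * 2 ^ 15)%:R)^-1 :> R); last by rewrite fmorphV rmorph_nat.
set x := num_heavy w j.
have n1 : (0 < n)%N by lia.
have hmx : m <= x%:Z.
  by rewrite /m ceil_le_int; apply: ltW.
have hPx : (P <= 2 * x)%N by lia.
have x1 : (1 <= x)%N by lia.
have hx2n : (x <= 2 ^ n)%N.
  by rewrite /x /num_heavy; apply: leq_trans (max_card _) _; rewrite card_ord.
set ps := primes_in P.
set N := size ps.
set l := trunc_log 2 P.
set L := (n %/ l)%N.
have l1 : (1 <= l)%N by apply: trunc_log_max => //; rewrite expn1.
have hlP : (2 ^ l <= P)%N by apply: trunc_logP => //; lia.
have ln : (l <= n.+1)%N.
  have : (2 ^ l <= 2 ^ n.+1)%N by rewrite expnS; lia.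
  by rewrite leq_exp2l.
have hLl : (L * l <= n)%N by apply: leq_divM.
have hcheb := cheb hP2; rewrite -/ps -/N -/l in hcheb.
have hN : (N <= P.+1)%N.
  rewrite /N /ps /primes_in size_filter; apply: leq_trans (count_size _ _) _.
  by rewrite size_iota.
have psP : forall p, p \in ps -> [/\ prime p, (P <= p)%N & (p <= P.*2)%N].
  by move=> p; rewrite mem_filter mem_iota => /andP[pp /andP[a b]]; split => //; lia.
have ups : uniq ps by apply: filter_uniq; apply: iota_uniq.
have aps : all prime ps by apply: filter_all.
have hpos : forall p, p \in ps -> (0 < p)%N.
  by move=> p /psP [pp _ _]; apply: prime_gt0.
have hcnt : forall t t' : 'I_(2 ^ n), t != t' ->
    (count (fun p => t %% p == t' %% p) ps <= L)%N.
  move=> t t' ne; rewrite leq_divRL; last lia.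
  apply: ltnW; apply: count_mod_bound => //; first lia.
  by move=> p /psP [].
have hT := @T_bound n w j ps L hpos hcnt.
rewrite -/x -/N in hT.
have m1 : 1 <= m by lia.
have hk1 : 1 <= k.
  have : 0 < k by rewrite /k ceil_gt0 divr_gt0 // ?ltr0z ?mulr_gt0 ?ltr0n; lia.
  lia.
have hkm : ((k - 1)%:~R : R) < m%:~R / (4 * P%:R) by apply: ceilB1_lt.
have hpk : forall p, p \in ps -> p%:R * (k - 1)%:~R <= x%:R / 2 :> R.
  move=> p /psP [_ _ hp2].
  set a := ((k - 1)%:~R : R).
  have a0 : 0 <= a by rewrite ler0z subr_ge0.
  have P0 : 0 < P%:R :> R by rewrite ltr0n; lia.
  have ha : a * (4 * P%:R) < m%:~R by rewrite -ltr_pdivlMr // mulr_gt0.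
  have hmxR : (m%:~R : R) <= x%:R.
    have : (m%:~R : R) <= (x%:Z)%:~R by rewrite ler_int.
    by [].
  have hp2R : (p%:R : R) <= 2 * P%:R.
    by rewrite -natrM ler_nat; lia.
  nra.
have hA : forall mu : R, 0 <= mu ->
    mu * x%:R * N%:R - mu ^+ 2 * (x * (N + x * L))%N%:R <=
    \sum_(p <- ps) (#|[set r : 'I_p | k <= (cnt w j p r)%:Z]|)%:R.
  move=> mu mu0.
  apply: le_trans (_ : _ <= \sum_(p <- ps)
      (mu * x%:R - mu ^+ 2 * (\sum_(r < p) (cnt w j p r) ^ 2)%N%:R)) _.
    rewrite sumrB sumr_const_seq' -mulr_sumr -natr_sum -/N.
    apply: lerB => //; apply: ler_wpM2l; first exact: sqr_ge0.
    by rewrite ler_nat.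
  rewrite big_seq [X in _ <= X]big_seq; apply: ler_sum => p pin.
  have [pp _ _] := psP p pin.
  apply: (@perp R p (fun r : 'I_p => cnt w j p r)) => //.
  - exact: prime_gt0.
  - exact: cnt_sum (prime_gt0 pp).
  - exact: hpk.
have hG : \sum_(p <- ps) (#|[set r : 'I_p | k <= (cnt w j p r)%:Z]|)%:R / (2 * P%:R)
    <= \sum_(p <- ps) (#|[set r : 'I_p | k <= (num_good_t w p r h)%:Z]|)%:R / p%:R :> R.
  rewrite big_seq [X in _ <= X]big_seq; apply: ler_sum => p pin.
  have [pp _ hp2] := psP p pin.
  have hAG : leq #|[set r : 'I_p | k <= (cnt w j p r)%:Z]|
      #|[set r : 'I_p | k <= (num_good_t w p r h)%:Z]|.
    apply: subset_leq_card; apply/subsetP => r; rewrite !inE => hr.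
    apply: (le_trans hr); rewrite lez_nat; exact: cnt_le.
  set a := (#|_|)%:R; set g := (#|_|)%:R.
  have ag : a <= g by rewrite ler_nat.
  have a0 : 0 <= a by [].
  have p0 : 0 < p%:R :> R by rewrite ltr0n prime_gt0.
  have P0 : 0 < P%:R :> R by rewrite ltr0n; lia.
  have hp2R : (p%:R : R) <= 2 * P%:R by rewrite -natrM ler_nat; lia.
  rewrite ler_pdivlMr //.
  have q1 : p%:R / (2 * P%:R) <= 1 :> R by rewrite ler_pdivrMr ?mul1r // mulr_gt0.
  have q0 : 0 <= p%:R / (2 * P%:R) :> R by rewrite divr_ge0 // ?ltW // mulr_gt0.
  rewrite mulrAC -mulrA.
  nra.
rewrite -mulr_suml in hG.
rewrite /success_prob -/ps -/N.
have N0 : (0 < N)%N.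
  move: hcheb; case: (N) => //; rewrite muln0; lia.
have hnat : (8 * P * (3 + L) <= (120 * 2 ^ 15) * n * N)%N.
  have e1 : ((l + 2) * (3 + L) <= 15 * n)%N by nia.
  move: hcheb e1; move: (2 ^ 15)%N => C1 hc e1.
  apply: leq_trans (_ : (8 * (C1 * (l + 2) * N) * (3 + L) <= _)%N).
    by apply: leq_mul => //; apply: leq_mul.
  have : (8 * C1 * N * ((l + 2) * (3 + L)) <= 8 * C1 * N * (15 * n))%N.
    by apply: leq_mul.
  have -> : (8 * (C1 * (l + 2) * N) * (3 + L) = 8 * C1 * N * ((l + 2) * (3 + L)))%N.
    by rewrite !mulnA; ring.
  move=> H; apply: leq_trans H _.
  have -> : (120 * C1 * n * N = 8 * C1 * N * (15 * n))%N by ring.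
  by [].
apply: (@final_alg R N%:R P%:R L%:R n%:R _ _ (120 * 2 ^ 15)%:R).
- by rewrite ltr0n.
- by rewrite ltr0n; lia.
- by [].
- by rewrite ltr0n.
- by rewrite ltr0n.
- exact: hG.
- apply: (@mu_alg R N%:R x%:R L%:R (x * (N + x * L))%N%:R).
  + by rewrite ltr0n.
  + by rewrite ltr0n.
  + by [].
  + by rewrite -natrM ler_nat; lia.
  + by rewrite natrM natrD natrM.
  + move=> mu mu0; have := hA mu mu0; by [].
- have := hnat; rewrite -(ler_nat R) !natrM natrD.
  by [].
Qed.
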